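(* Let $1<q<n+1$ and $\lambda_i=\frac{i+\min\{i,q-1\}}{n+q-1}$ for $i=1,\dots,n-1$. Let $\mu$ be a finite Borel measure on $S^{n-1}$ satisfying $\frac{\mu(\xi_i\cap S^{n-1})}{|\mu|}<\lambda_i$ for every $i$-dimensional linear subspace $\xi_i\subset\mathbb R^n$ and every $i=1,\dots,n-1$, and let $\overline\mu_m$ be constructed as in the context. Then there exist $\widetilde\lambda_i\in(0,\lambda_i)$ ($i=1,\dots,n-1$), $N_0>0$ and $\eta_0\in(0,1)$ such that for all $m>N_0$, $$\frac{\overline\mu_m\big(\mathfrak N_{\eta_0}(\xi_i\cap S^{n-1})\big)}{|\mu|}<\widetilde\lambda_i$$ for every $i$-dimensional subspace $\xi_i\subset\mathbb R^n$ and every $i=1,\dots,n-1$.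
   Context: $|\nu|$ denotes total mass. For $\omega\subset S^{n-1}$ and $\eta>0$, $\mathfrak N_\eta(\omega)=\{v\in S^{n-1}: |v-u|<\eta\text{ for some }u\in\omega\}$. Construction: for each positive integer $m$, $U_{1,m},\dots,U_{\mathcal N_m,m}$ is a partition of $S^{n-1}$ into Borel sets of diameter less than $1/m$ with nonempty interior relative to $S^{n-1}$, $v_{i,m}\in U_{i,m}$ are in general position in dimension $n$, $\mu_m=\sum_{i=1}^{\mathcal N_m}(\mu(U_{i,m})+\mathcal N_m^{-2})\delta_{v_{i,m}}$ and $\overline\mu_m=\frac{|\mu|}{|\mu_m|}\mu_m$. *)

(* Defs.v *)
From HB Require Import structures.
From mathcomp Require Import all_boot all_order all_algebra.
From mathcomp Require Import all_classical all_reals all_analysis.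
Set Implicit Arguments. Unset Strict Implicit. Unset Printing Implicit Defensive.
Import Order.TTheory GRing.Theory Num.Theory numFieldNormedType.Exports.
Local Open Scope classical_set_scope.
Local Open Scope ring_scope.

(* The Borel sigma-algebra on R^n: generated by the open sets of the
   (product = Euclidean) topology of 'rV[R]_n. *)
Definition Rn_borel (R : realType) (n : nat) : set (set 'rV[R]_n) := (open : set_system 'rV[R]_n).
Definition Rn (R : realType) (n : nat) := g_sigma_algebraType (@Rn_borel R n).

Definition enorm (R : realType) (n : nat) (v : 'rV[R]_n) : R :=
  Num.sqrt (\sum_(j < n) v ord0 j ^+ 2).

Definition sphere (R : realType) (n : nat) : set 'rV[R]_n :=
  [set v | enorm v = 1].
Arguments sphere {R} n.

(* xi \cap S^{n-1}, xi a linear subspace given as the row space of a matrix *)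
Definition subsp_sphere (R : realType) (n : nat) (xi : 'M[R]_n) : set 'rV[R]_n :=
  [set v | (v <= xi)%MS /\ enorm v = 1].

Definition nbhd_sph (R : realType) (n : nat) (eta : R) (om : set 'rV[R]_n)
  : set 'rV[R]_n :=
  [set v | enorm v = 1 /\ exists2 u, om u & enorm (v - u) < eta].

Definition lam (R : realType) (n : nat) (q : R) (i : nat) : R :=
  (i%:R + Num.min i%:R (q - 1)) / (n%:R + q - 1).

(* The construction of the context, for a fixed m:
   N = N_m, U i = U_{i,m}, v i = v_{i,m}. *)
Definition good_partition (R : realType) (n : nat) (m : nat)
  (N : nat) (U : 'I_N -> set 'rV[R]_n) (v : 'I_N -> 'rV[R]_n) : Prop :=
      (forall i, measurable (U i : set (Rn R n))) /\
      (forall i, U i `<=` sphere n) /\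
      (forall x, sphere n x -> exists i, U i x) /\
      (forall i j, i != j -> U i `&` U j = set0) /\
      (forall i, exists d : R, d < m%:R^-1 /\
          forall x y, U i x -> U i y -> enorm (x - y) <= d) /\
      (forall i, exists x, exists r : R, 0 < r /\
          forall y, sphere n y -> enorm (y - x) < r -> U i y) /\
      (forall i, U i (v i)) /\
      (forall k (f : 'I_k -> 'I_N), injective f -> (k <= n)%N ->
          row_free (\matrix_(a < k) v (f a))).

Definition tmass (R : realType) (n : nat)
  (mu : set (Rn R n) -> \bar R) : R := fine (mu (sphere n)).

Definition mu_disc (R : realType) (n : nat) (mu : set (Rn R n) -> \bar R)
  (N : nat) (U : 'I_N -> set 'rV[R]_n) (v : 'I_N -> 'rV[R]_n)
  (A : set 'rV[R]_n) : R :=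
  \sum_(i < N | `[< A (v i) >]) (fine (mu (U i)) + (N%:R ^+ 2)^-1).

(* bar mu_m = |mu| / |mu_m| * mu_m ; note |mu_m| = mu_m(S^{n-1}) *)
Definition mu_bar (R : realType) (n : nat) (mu : set (Rn R n) -> \bar R)
  (N : nat) (U : 'I_N -> set 'rV[R]_n) (v : 'I_N -> 'rV[R]_n)
  (A : set 'rV[R]_n) : R :=
  tmass mu / mu_disc mu U v (sphere n) * mu_disc mu U v A.

(* Main.v *)
Require Import Defs.
From HB Require Import structures.
From mathcomp Require Import all_boot all_order all_algebra.
From mathcomp Require Import all_classical all_reals all_analysis.
From mathcomp Require Import ring lra.
Import Order.TTheory GRing.Theory Num.Theory numFieldNormedType.Exports.
Local Open Scope classical_set_scope.
Local Open Scope ring_scope.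

Set Implicit Arguments. Unset Strict Implicit. Unset Printing Implicit Defensive.
Section EN.
Variables (R : realType) (n : nat).
Implicit Types (x y v : 'rV[R]_n).

Definition ss v := \sum_(j < n) v ord0 j ^+ 2.

Lemma ss_ge0 v : 0 <= ss v.
Proof. by apply: sumr_ge0 => j _; exact: sqr_ge0. Qed.

Lemma enorm_ge0 v : 0 <= enorm v.
Proof. exact: sqrtr_ge0. Qed.

Lemma enorm_sq v : enorm v ^+ 2 = ss v.
Proof. by rewrite /enorm sqr_sqrtr // ss_ge0. Qed.

Lemma enorm_coord v j : `|v ord0 j| <= enorm v.
Proof.
rewrite /enorm -sqrtr_sqr ler_sqrt ?ss_ge0 //.
rewrite /ss (bigD1 j) //= lerDl; apply: sumr_ge0 => k _; exact: sqr_ge0.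
Qed.

Lemma sq_sum_le (a : 'I_n -> R) : (forall j, 0 <= a j) ->
  \sum_j a j ^+ 2 <= (\sum_j a j) ^+ 2.
Proof.
move=> a0; rewrite expr2 mulr_suml; apply: ler_sum => j _.
rewrite expr2 ler_wpM2l //; rewrite (bigD1 j) //= lerDl.
by apply: sumr_ge0.
Qed.

Lemma enorm_le_sum v : enorm v <= \sum_j `|v ord0 j|.
Proof.
have h0 : 0 <= \sum_j `|v ord0 j| by apply: sumr_ge0.
rewrite /enorm -(ger0_norm h0) -sqrtr_sqr ler_sqrt ?sqr_ge0 //.
rewrite /ss; under eq_bigr do rewrite -real_normK ?num_real //.
by apply: sq_sum_le.
Qed.

Lemma enorm_eq0 v : enorm v = 0 -> v = 0.
Proof.
move=> h; apply/rowP => j; rewrite mxE; apply/eqP; rewrite -normr_le0.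
by rewrite -h enorm_coord.
Qed.

Lemma enorm0 : enorm (0 : 'rV[R]_n) = 0.
Proof.
rewrite /enorm big1 ?sqrtr0 // => j _; by rewrite mxE expr0n.
Qed.

Lemma enormN v : enorm (- v) = enorm v.
Proof. by rewrite /enorm; congr Num.sqrt; apply: eq_bigr => j _; rewrite mxE sqrrN. Qed.

Lemma enormB x y : enorm (x - y) = enorm (y - x).
Proof. by rewrite -enormN opprB. Qed.

Lemma enormZ (c : R) v : enorm (c *: v) = `|c| * enorm v.
Proof.
rewrite /enorm -sqrtr_sqr -sqrtrM ?sqr_ge0 //; congr Num.sqrt.
by rewrite mulr_sumr; apply: eq_bigr => j _; rewrite mxE exprMn.
Qed.

Lemma cauchy_schwarz (a b : 'I_n -> R) :
  (\sum_j a j * b j) ^+ 2 <= (\sum_j a j ^+ 2) * (\sum_j b j ^+ 2).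
Proof.
set A := \sum_j a j ^+ 2; set B := \sum_j a j * b j; set C := \sum_j b j ^+ 2.
have C0 : 0 <= C by apply: sumr_ge0 => j _; exact: sqr_ge0.
have [Ceq0|Cpos] := eqVneq C 0.
  have b0 : forall j, b j = 0.
    move=> j; apply/eqP; rewrite -sqrf_eq0; apply/eqP.
    move/eqP: Ceq0; rewrite psumr_eq0; last by move=> k _; exact: sqr_ge0.
    by move/allP => /(_ j (mem_index_enum j)) /eqP.
  rewrite Ceq0 mulr0 /B big1 ?expr0n //= => j _; by rewrite b0 mulr0.
have Cp : 0 < C by rewrite lt0r Cpos.
have h : 0 <= \sum_j (C * a j - B * b j) ^+ 2 by apply: sumr_ge0 => j _; exact: sqr_ge0.
have e : \sum_j (C * a j - B * b j) ^+ 2 = C * (A * C - B ^+ 2).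
  have e' j : (C * a j - B * b j)^+2 = C^+2 * a j^+2 - (2*C*B) * (a j * b j) + B^+2 * b j^+2 by ring.
  rewrite (eq_bigr _ (fun j _ => e' j)) !big_split /= sumrN -!mulr_sumr -/A -/B -/C.
  ring.
rewrite e in h; rewrite -subr_ge0.
by move: h; rewrite pmulr_rge0.
Qed.

Lemma enormD x y : enorm (x + y) <= enorm x + enorm y.
Proof.
have h0 : 0 <= enorm x + enorm y by rewrite addr_ge0 ?enorm_ge0.
rewrite {1}/enorm -(ger0_norm h0) -sqrtr_sqr ler_sqrt ?sqr_ge0 //.
rewrite -/(ss (x + y)) sqrrD !enorm_sq.
have -> : ss (x + y) = ss x + (\sum_j x ord0 j * y ord0 j) *+ 2 + ss y.
  rewrite /ss -sumrMnl -!big_split /=.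
  by apply: eq_bigr => j _; rewrite mxE sqrrD.
rewrite lerD2r lerD2l lerMn2r /=.
rewrite (le_trans (ler_norm _)) //.
rewrite -(@ler_pXn2r _ 2) //= ?nnegrE ?mulr_ge0 ?enorm_ge0 //.
by rewrite real_normK ?num_real // exprMn !enorm_sq cauchy_schwarz.
Qed.

Lemma enorm_tri x y z : enorm (x - z) <= enorm (x - y) + enorm (y - z).
Proof. by rewrite (le_trans _ (enormD _ _)) // addrA subrK. Qed.

End EN.

Lemma enorm_mul (R : realType) n m (w : 'rV[R]_m) (M : 'M[R]_(m, n)) :
  enorm (w *m M) <= enorm w * \sum_a \sum_b `|M a b|.
Proof.
apply: (le_trans (enorm_le_sum _)).
rewrite exchange_big /= mulr_sumr; apply: ler_sum => b _.
rewrite mxE mulr_sumr (le_trans (ler_norm_sum _ _ _)) //; apply: ler_sum => a _.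
rewrite normrM ler_wpM2r //; exact: enorm_coord.
Qed.
Section LA.
Variables (R : realType) (n : nat).

Definition symidem (P : 'M[R]_n) := P^T = P /\ P *m P = P.

Lemma gram_unit r (B : 'M[R]_(r, n)) : row_free B -> (B *m B^T) \in unitmx.
Proof.
move=> fB; rewrite -row_free_unit -kermx_eq0; apply/rowV0P => w /sub_kermxP wG.
have h : ss (w *m B) = 0.
  have e2 : (w *m B) *m (w *m B)^T = 0.
    by rewrite trmx_mul mulmxA -(mulmxA w) wG mul0mx.
  have := congr1 (fun M : 'M[R]_1 => M ord0 ord0) e2.
  rewrite /= mxE [RHS]mxE => e; rewrite -[RHS]e /ss.
  by apply: eq_bigr => j _; rewrite expr2 [(w *m B)^T _ _]mxE.
have : enorm (w *m B) = 0.
  by rewrite /enorm -[X in Num.sqrt X]/(ss (w *m B)) h sqrtr0.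
move/enorm_eq0; rewrite -(mul0mx 1 B) => /(row_free_inj fB).
by [].
Qed.

Lemma proj_of_free r (B : 'M[R]_(r, n)) : row_free B ->
  exists P : 'M[R]_n, symidem P /\ (P :=: B)%MS.
Proof.
move=> fB; have uG : (B *m B^T) \in unitmx := gram_unit fB.
have sG : (B *m B^T)^T = B *m B^T by rewrite trmx_mul trmxK.
exists (B^T *m invmx (B *m B^T) *m B); split; first split.
- by rewrite !trmx_mul trmxK trmx_inv sG mulmxA.
- have -> : B^T *m invmx (B *m B^T) *m B *m (B^T *m invmx (B *m B^T) *m B) =
     B^T *m (invmx (B *m B^T) *m (B *m B^T)) *m invmx (B *m B^T) *m B.
    by rewrite !mulmxA.
  by rewrite mulVmx // mulmx1.
- apply/eqmxP; apply/andP; split; first exact: submxMl.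
  have e : B = B *m (B^T *m invmx (B *m B^T) *m B).
    by rewrite !mulmxA mulmxV // mul1mx.
  by rewrite {1}e submxMl.
Qed.

Lemma proj_exists (xi : 'M[R]_n) :
  exists P : 'M[R]_n, symidem P /\ (P :=: xi)%MS.
Proof.
have [P [sP eP]] := proj_of_free (row_base_free xi).
exists P; split => //; exact: (eqmx_trans eP (eq_row_base xi)).
Qed.

Lemma symidem_sub (P : 'M[R]_n) (w : 'rV[R]_n) : symidem P ->
  (w <= P)%MS = (w *m P == w).
Proof.
case=> _ PP; apply/idP/idP.
  by case/submxP => D ->; rewrite -mulmxA PP.
by move/eqP => <-; rewrite submxMl.
Qed.

Lemma idem_fact r (C : 'M[R]_(n, r)) (D : 'M[R]_(r, n)) C' D' :
  C' *m C = 1%:M -> D *m D' = 1%:M -> (C *m D) *m (C *m D) = C *m D ->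
  D *m C = 1%:M.
Proof.
move=> hC hD PP.
have := congr1 (fun M => C' *m M *m D') PP => /=.
have -> : C' *m (C *m D *m (C *m D)) *m D' = (C' *m C) *m (D *m C) *m (D *m D').
  by rewrite !mulmxA.
have -> : C' *m (C *m D) *m D' = (C' *m C) *m (D *m D') by rewrite !mulmxA.
by rewrite hC hD !mul1mx !mulmx1.
Qed.

Lemma rank_trace (P : 'M[R]_n) : P *m P = P -> (\rank P)%:R = \tr P.
Proof.
move=> PP.
have [C' hC] := row_fullP (col_base_full P).
have [D' hD] := row_freeP (row_base_free P).
have e := mulmx_base P.
have DC := idem_fact hC hD (etrans (congr2 mulmx e e) (etrans PP (esym e))).
by rewrite -{2}e mxtrace_mulC DC mxtrace1.
Qed.

Lemma symidem_entry (P : 'M[R]_n) a b : symidem P -> `|P a b| <= 1.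
Proof.
case=> sP PP.
have e : P a a = \sum_k P a k ^+ 2.
  rewrite -{1}PP mxE; apply: eq_bigr => k _.
  by rewrite expr2 -{2}sP mxE.
have h1 : P a b ^+ 2 <= P a a.
  by rewrite e (bigD1 b) //= lerDl sumr_ge0 // => k _; exact: sqr_ge0.
have h2 : P a a ^+ 2 <= P a a.
  by rewrite [X in _ <= X]e (bigD1 a) //= lerDl sumr_ge0 // => k _; exact: sqr_ge0.
have h3 : P a a <= 1.
  have : 0 <= P a a by rewrite e sumr_ge0 // => k _; exact: sqr_ge0.
  move: h2; rewrite expr2 => h2 h0; nra.
rewrite -(@ler_pXn2r _ 2) ?nnegrE //= expr1n real_normK ?num_real //.
exact: le_trans h1 h3.
Qed.

End LA.
Section GEO.
Variables (R : realType) (n : nat).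
Implicit Types (P : 'M[R]_n) (x y u v w : 'rV[R]_n).

Lemma enorm_rev x y : enorm x - enorm y <= enorm (x - y).
Proof.
have := enorm_tri x y 0; rewrite !subr0 => h; lra.
Qed.

Lemma approx_sph P P' v (eps : R) : symidem P -> symidem P' ->
  subsp_sphere P v ->
  \sum_a \sum_b `|(P' - P) a b| <= eps -> eps < 1/2 ->
  exists w, subsp_sphere P' w /\ enorm (w - v) <= 2 * eps.
Proof.
move=> sP sP' [vP v1] hs he.
have vPe : v *m P = v by apply/eqP; rewrite -symidem_sub.
set w0 := v *m P'.
have e0 : w0 - v = v *m (P' - P) by rewrite mulmxBr vPe.
have h0 : enorm (w0 - v) <= eps.
  rewrite e0 (le_trans (enorm_mul _ _)) // v1 mul1r //.
have hw0 : 1 - eps <= enorm w0.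
  have := enorm_rev v w0; rewrite enormB v1 => h; lra.
have w0pos : 0 < enorm w0 by lra.
exists ((enorm w0)^-1 *: w0); split; first split.
- by rewrite scalemx_sub // submxMl.
- by rewrite enormZ ger0_norm ?invr_ge0 ?enorm_ge0 // mulVf // gt_eqF.
have : enorm ((enorm w0)^-1 *: w0 - w0) <= eps.
  have -> : (enorm w0)^-1 *: w0 - w0 = ((enorm w0)^-1 - 1) *: w0.
    by rewrite scalerBl scale1r.
  rewrite enormZ -{2}(ger0_norm (enorm_ge0 w0)) -normrM mulrBl mulVf ?gt_eqF //.
  rewrite mul1r distrC.
  have := enorm_rev w0 v; have := enorm_rev v w0; rewrite v1 (enormB v) => h1 h2.
  rewrite ler_norml; apply/andP; split; lra.
move=> h1; have := enorm_tri ((enorm w0)^-1 *: w0) w0 v; lra.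
Qed.

Lemma closed_sph P x : symidem P -> enorm x = 1 ->
  (forall e : R, 0 < e -> exists u, subsp_sphere P u /\ enorm (x - u) < e) ->
  subsp_sphere P x.
Proof.
move=> sP x1 hx; split => //; rewrite symidem_sub //.
set K := \sum_a \sum_b `|(P - 1%:M) a b|.
have K0 : 0 <= K by apply: sumr_ge0 => a _; apply: sumr_ge0.
have hz : forall e, 0 < e -> enorm (x *m P - x) <= e * K.
  move=> e e0; have [u [[uP _] hu]] := hx e e0.
  have uPe : u *m P = u by apply/eqP; rewrite -symidem_sub.
  have -> : x *m P - x = (x - u) *m (P - 1%:M).
    by rewrite mulmxBr mulmx1 mulmxBl uPe; rewrite opprB addrA subrK.
  rewrite (le_trans (enorm_mul _ _)) // ler_wpM2r //; exact: ltW.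
rewrite -subr_eq0; apply/eqP; apply: enorm_eq0.
apply/eqP; rewrite eq_le enorm_ge0 andbT.
set z := enorm _.
rewrite leNgt; apply/negP => zpos.
have := hz (z / (K + 1)) (divr_gt0 zpos (ltr_wpDl K0 ltr01)).
rewrite -/z; set t := z / (K + 1) => h.
have tpos : 0 < t by rewrite divr_gt0 // ltr_wpDl.
have ht : t * (K + 1) = z by rewrite /t divfK // gt_eqF // ltr_wpDl.
nra.
Qed.

End GEO.
Lemma mx_entry_le (R : realType) m k (M : 'M[R]_(m, k)) a b : `|M a b| <= `|M|.
Proof.
by rewrite [leRHS]/Num.Def.normr /= mx_normrE; apply/bigmax_geP; right => /=; exists (a, b).
Qed.

Lemma cont_sum (R : realType) (T : topologicalType) (I : Type) (s : seq I)
  (F : I -> T -> R) : (forall k, continuous (F k)) ->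
  continuous (fun x => \sum_(k <- s) F k x).
Proof.
move=> hF; elim: s => [|a s IH].
  have -> : (fun x => \sum_(k <- [::]) F k x) = fun _ => 0.
    by apply: funext => x; rewrite big_nil.
  exact: cst_continuous.
have -> : (fun x => \sum_(k <- a :: s) F k x) = F a + (fun x => \sum_(k <- s) F k x).
  by apply: funext => x; rewrite big_cons.
by move=> x; apply: continuousD; [exact: hF | exact: IH].
Qed.

Lemma closed_zero (R : realType) (T : topologicalType) (g : T -> R) :
  continuous g -> closed [set x | g x = 0].
Proof. move=> cg; have := (continuous_closedP g).1 cg _ (@closed_eq R 0); exact. Qed.

Section COMP.
Variables (R : realType) (n i : nat).

Definition Kset : set 'rV[R]_(n * n) :=
  [set x | symidem (vec_mx x) /\ \tr (vec_mx x) = i%:R].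

Lemma vec_cont a b : continuous (fun x : 'rV[R]_(n * n) => vec_mx x a b).
Proof.
have -> : (fun x : 'rV[R]_(n * n) => vec_mx x a b) =
  (fun x : 'rV[R]_(n * n) => x ord0 (mxvec_index a b)).
  by apply: funext => x; rewrite mxE.
exact: coord_continuous.
Qed.

Lemma Kset_closed : closed Kset.
Proof.
pose g1 (p : 'I_n * 'I_n) (x : 'rV[R]_(n * n)) := vec_mx x p.2 p.1 - vec_mx x p.1 p.2.
pose g2 (p : 'I_n * 'I_n) (x : 'rV[R]_(n * n)) :=
  \sum_k vec_mx x p.1 k * vec_mx x k p.2 - vec_mx x p.1 p.2.
pose g3 (x : 'rV[R]_(n * n)) := \sum_k vec_mx x k k - i%:R.
have c1 p : continuous (g1 p).
  by move=> x; apply: continuousB; apply: vec_cont.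
have c2 p : continuous (g2 p).
  move=> x; apply: continuousB; last exact: vec_cont.
  have hs := @cont_sum R _ _ (index_enum 'I_n) (fun k (x : 'rV[R]_(n * n)) => vec_mx x p.1 k * vec_mx x k p.2).
  apply: hs => k y; by apply: continuousM; apply: vec_cont.
have c3 : continuous g3.
  move=> x; apply: (@continuousB _ _ _ (fun x : 'rV[R]_(n * n) => \sum_k vec_mx x k k) (fun _ => i%:R)); last exact: cst_continuous.
  have hs := @cont_sum R _ _ (index_enum 'I_n) (fun k (x : 'rV[R]_(n * n)) => vec_mx x k k).
  by apply: hs => k y; apply: vec_cont.
have -> : Kset = (\bigcap_(p in setT) [set x | g1 p x = 0]) `&`
   (\bigcap_(p in setT) [set x | g2 p x = 0]) `&` [set x | g3 x = 0].
  apply/seteqP; split => x.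
    move=> [[sT PP] tr]; split; first split.
    - move=> p _; rewrite /g1 /=; apply/eqP; rewrite subr_eq0; apply/eqP.
      by rewrite -{1}sT mxE.
    - move=> p _; rewrite /g2 /=; apply/eqP; rewrite subr_eq0; apply/eqP.
      by rewrite -{3}PP mxE.
    - by rewrite /= /g3 -tr /mxtrace subrr.
  move=> [[h1 h2] h3]; split; first split.
  - apply/matrixP => a b; rewrite mxE; apply/eqP; rewrite -subr_eq0; apply/eqP.
    exact: (h1 (a, b) I).
  - apply/matrixP => a b; rewrite mxE; apply/eqP; rewrite -subr_eq0; apply/eqP.
    exact: (h2 (a, b) I).
  - by apply/eqP; rewrite -subr_eq0; apply/eqP; exact: h3.
apply: closedI; first apply: closedI; try apply: closed_bigI => p _;
  exact: closed_zero.
Qed.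

Lemma Kset_compact : compact Kset.
Proof.
have Bco : compact [set v : 'rV[R]_(n * n) | forall k, v ord0 k \in `[(-1 : R), 1]].
  apply: (@rV_compact _ _ (fun=> `[(-1 : R), 1]%classic)).
  by move=> _; apply: segment_compact.
apply: subclosed_compact Kset_closed Bco _ => x [sx _] k.
case/mxvec_indexP: k => a b.
have := symidem_entry a b sx; rewrite mxE => h.
by rewrite in_itv /= -ler_norml.
Qed.

End COMP.
Lemma rank_tr (R : realType) n (P : 'M[R]_n) i : symidem P ->
  (\rank P = i) <-> (\tr P = i%:R).
Proof.
case=> _ PP; rewrite -rank_trace //; split => [->//|h].
by apply/eqP; rewrite -(eqr_nat R) h.
Qed.

Lemma cover_lemma (R : realType) (n i : nat) (delta : 'M[R]_n -> R) :
  (forall P, symidem P -> \rank P = i -> 0 < delta P) ->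
  exists s : seq 'M[R]_n, (forall P, P \in s -> symidem P /\ \rank P = i) /\
  forall P', symidem P' -> \rank P' = i -> exists2 P, P \in s &
     forall v, subsp_sphere P' v ->
       exists w, subsp_sphere P w /\ enorm (w - v) < delta P / 2.
Proof.
move=> dpos.
set c : R := (n * n)%:R + 1.
have c0 : 0 < c by rewrite /c ltr_wpDl.
pose rho (x : 'rV[R]_(n * n)) := Num.min (delta (vec_mx x) / 8) (1 / 4) / c.
have rpos x : @Kset R n i x -> 0 < rho x.
  move=> [sx tx]; rewrite /rho divr_gt0 // lt_min divr_gt0 //=.
  by apply: dpos => //; apply/(rank_tr _ sx).
have Kco := @Kset_compact R n i.
rewrite compact_cover in Kco.
have [D' sD cov] : finite_subset_cover (@Kset R n i) (fun x => ball x (rho x)) (@Kset R n i).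
  apply: Kco; first by move=> x _; exact: ball_open.
  by move=> x Kx; exists x => //; apply: ballxx; exact: rpos.
exists [seq vec_mx x | x <- finmap.enum_fset D']; split.
  move=> P /mapP [x xD ->].
  have := sD x xD; rewrite inE => -[sx tx]; split => //; exact/(rank_tr _ sx).
move=> P' sP' rP'.
have KP' : @Kset R n i (mxvec P') by rewrite /Kset /= mxvecK; split => //; exact/(rank_tr _ sP').
have [x xD bx] := cov _ KP'.
have Kx : @Kset R n i x by have := sD x xD; rewrite inE.
exists (vec_mx x); first by apply/mapP; exists x.
move=> v hv.
set m0 := Num.min (delta (vec_mx x) / 8) (1 / 4).
have dp : 0 < delta (vec_mx x) by case: Kx => sx tx; apply: dpos => //; apply/(rank_tr _ sx).
have hsum : \sum_a \sum_b `|(vec_mx x - P') a b| <= m0.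
  have hb : forall a b, `|(vec_mx x - P') a b| <= rho x.
    move=> a b; rewrite mxE -(mxvecK P') !mxE.
    have := mx_entry_le (x - mxvec P') ord0 (mxvec_index a b); rewrite !mxE => h.
    apply: ltW; apply: (le_lt_trans h).
    by move: bx; rewrite -ball_normE /=.
  apply: le_trans (_ : \sum_(a < n) \sum_(b < n) rho x <= m0).
    by apply: ler_sum => a _; apply: ler_sum => b _; exact: hb.
  rewrite sumr_const sumr_const card_ord -mulrnA -mulr_natr.
  rewrite /rho -/m0 mulrAC ler_pdivrMr // ler_wpM2l ?lerDl //.
  by rewrite le_min !divr_ge0 ?ltW.
have m0le : m0 < 1/2.
  have : m0 <= 1 / 4 by rewrite /m0 ge_min lexx orbT.
  lra.
have [w [hw hwv]] := approx_sph sP' Kx.1 hv hsum m0le.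
exists w; split => //; apply: (le_lt_trans hwv).
have : m0 <= delta (vec_mx x) / 8 by rewrite /m0 ge_min lexx.
lra.
Qed.
Lemma bigmax_ub (R : realType) (A : eqType) (s : seq A) (F : A -> R) a :
  a \in s -> F a <= \big[Num.max/0]_(b <- s) F b.
Proof.
elim: s => [//|b s IH]; rewrite in_cons big_cons => /orP [/eqP ->|h].
  by rewrite le_max lexx.
by rewrite le_max (IH h) orbT.
Qed.

Lemma bigmax_ge0 (R : realType) (A : Type) (s : seq A) (F : A -> R) :
  0 <= \big[Num.max/0]_(b <- s) F b.
Proof.
elim: s => [|b s IH]; first by rewrite big_nil.
by rewrite big_cons le_max IH orbT.
Qed.

Lemma bigmax_lt (R : realType) (A : eqType) (s : seq A) (F : A -> R) c :
  0 < c -> (forall a, a \in s -> F a < c) -> \big[Num.max/0]_(b <- s) F b < c.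
Proof.
move=> c0; elim: s => [|b s IH] h; first by rewrite big_nil.
rewrite big_cons gt_max h ?mem_head //= IH // => a as_; apply: h.
by rewrite in_cons as_ orbT.
Qed.

Lemma sum_ge_term (R : realType) k (F : 'I_k -> R) j :
  (forall a, 0 <= F a) -> F j <= \sum_a F a.
Proof. by move=> h; rewrite (bigD1 j) //= lerDl sumr_ge0. Qed.
Lemma mem_bigU (T : Type) (I : eqType) (s : seq I) (P : pred I) (F : I -> set T) x :
  (\big[setU/set0]_(j <- s | P j) F j) x <-> exists j, [/\ j \in s, P j & F j x].
Proof.
elim: s => [|a s IH]; first by rewrite big_nil; split => // -[j []].
rewrite big_cons; case: ifP => Pa; split.
- case => [h|/IH [j [js Pj Fj]]]; first by exists a; rewrite mem_head.
  by exists j; rewrite in_cons js orbT.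
- case => j [+ Pj Fj]; rewrite in_cons => /orP [/eqP ej|js]; first by left; rewrite -ej.
  by right; apply/IH; exists j.
- by case/IH => j [js Pj Fj]; exists j; rewrite in_cons js orbT.
- case => j [+ Pj Fj]; rewrite in_cons => /orP [/eqP ej|js].
    by rewrite ej Pa in Pj.
  by apply/IH; exists j.
Qed.

Lemma mem_bigI (T : Type) (I : eqType) (s : seq I) (P : pred I) (F : I -> set T) x :
  (\big[setI/setT]_(j <- s | P j) F j) x <-> forall j, j \in s -> P j -> F j x.
Proof.
elim: s => [|a s IH]; first by rewrite big_nil; split.
rewrite big_cons; case: ifP => Pa; split.
- case => Fa /IH h j; rewrite in_cons => /orP [/eqP ->//|]; exact: h.
- by move=> h; split; [apply: h; rewrite ?mem_head | apply/IH => j js; apply: h; rewrite in_cons js orbT].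
- move/IH => h j; rewrite in_cons => /orP [/eqP -> |]; [by rewrite Pa | exact: h].
- by move=> h; apply/IH => j js; apply: h; rewrite in_cons js orbT.
Qed.

Unset Implicit Arguments.
Section MEAS.
Variables (R : realType) (n : nat) (mu : {finite_measure set (Rn R n) -> \bar R}).
Variables (N : nat -> nat) (U : forall m, 'I_(N m) -> set 'rV[R]_n)
  (v : forall m, 'I_(N m) -> 'rV[R]_n).
Hypothesis hcons : forall m, (0 < m)%N -> good_partition m (U m) (v m).

Lemma U_meas m j : (0 < m)%N -> measurable (U m j : set (Rn R n)).
Proof. by move=> m0; case: (hcons m m0) => h _; exact: h. Qed.
Lemma U_sub m j : (0 < m)%N -> U m j `<=` sphere n.
Proof. by move=> m0; case: (hcons m m0) => _ [h _]; exact: h. Qed.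
Lemma U_cov m x : (0 < m)%N -> sphere n x -> exists j, U m j x.
Proof. by move=> m0; case: (hcons m m0) => _ [_ [h _]]; exact: h. Qed.
Lemma U_triv m : (0 < m)%N -> trivIset setT (U m).
Proof.
move=> m0; case: (hcons m m0) => _ [_ [_ [h _]]] a b _ _ [x [xa xb]].
apply/eqP; apply: contraT => ab; have := h a b ab.
by move/seteqP => [/(_ x) hx _]; case: (hx (conj xa xb)).
Qed.
Lemma U_diam m j : (0 < m)%N -> forall x y, U m j x -> U m j y -> enorm (x - y) < m%:R^-1.
Proof.
move=> m0; case: (hcons m m0) => _ [_ [_ [_ [h _]]]].
have [d [dm hd]] := h j => x y ux uy; exact: le_lt_trans (hd x y ux uy) dm.
Qed.
Lemma U_v m j : (0 < m)%N -> U m j (v m j).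
Proof. by move=> m0; case: (hcons m m0) => _ [_ [_ [_ [_ [_ [h _]]]]]]. Qed.

Definition cellsU m (P : pred 'I_(N m)) : set (Rn R n) :=
  \big[setU/set0]_(j < N m | P j) (U m j : set (Rn R n)).

Lemma cellsU_meas m P : (0 < m)%N -> measurable (cellsU m P).
Proof. by move=> m0; apply: bigsetU_measurable => j _; exact: U_meas m j m0. Qed.

Lemma mr_ge0 (A : set (Rn R n)) : 0 <= fine (mu A).
Proof. by apply: fine_ge0; exact: measure_ge0. Qed.

Lemma mr_le (A B : set (Rn R n)) : measurable A -> measurable B -> A `<=` B ->
  fine (mu A) <= fine (mu B).
Proof.
move=> mA mB AB; apply: fine_le; rewrite ?inE; try exact: fin_num_measure.
by apply: le_measure => //; rewrite inE.
Qed.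

Lemma mr_cells m P : (0 < m)%N ->
  fine (mu (cellsU m P)) = \sum_(j < N m | P j) fine (mu (U m j)).
Proof.
move=> m0; rewrite /cellsU measure_bigsetU_ord_cond.
- by rewrite sum_fine // => j _; exact: fin_num_measure (U_meas m j m0).
- by move=> j _; exact: U_meas m j m0.
- by move=> a b _ _ h; exact: (U_triv m m0 a b I I h).
Qed.

Lemma sphere_cells m : (0 < m)%N -> (sphere n : set (Rn R n)) = cellsU m xpredT.
Proof.
move=> m0; apply/seteqP; split => x.
  move=> sx; have [j hj] := U_cov m x m0 sx; apply/mem_bigU; exists j; split => //.
by case/mem_bigU => j [_ _ hj]; exact: U_sub m j m0 _ hj.
Qed.

Lemma meas_sphere : measurable (sphere n : set (Rn R n)).
Proof. by rewrite (sphere_cells 1 isT); exact: cellsU_meas 1 xpredT isT. Qed.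

Lemma mr_sphere m : (0 < m)%N -> \sum_(j < N m) fine (mu (U m j)) = tmass mu.
Proof. by move=> m0; rewrite /tmass (sphere_cells m m0) (mr_cells m xpredT m0). Qed.

Definition W k (A : set 'rV[R]_n) : set (Rn R n) :=
  cellsU k.+1 (fun j => `[< exists x, U k.+1 j x /\ nbhd_sph (k.+1%:R^-1) A x >]).
Definition Z K (A : set 'rV[R]_n) : set (Rn R n) :=
  \big[setI/setT]_(k < K.+1) W k A.

Lemma W_meas k A : measurable (W k A).
Proof. exact: cellsU_meas k.+1 _ isT. Qed.

Lemma Z_meas K A : measurable (Z K A).
Proof. by apply: bigsetI_measurable => k _; exact: W_meas. Qed.

Lemma nbhd_mono (r r' : R) (A : set 'rV[R]_n) : r <= r' -> nbhd_sph r A `<=` nbhd_sph r' A.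
Proof. by move=> rr x [x1 [u Au hu]]; split => //; exists u => //; exact: lt_le_trans rr. Qed.

Lemma nb_sub_W k A (r : R) : r <= k.+1%:R^-1 -> nbhd_sph r A `<=` W k A.
Proof.
move=> rk x hx; have [j hj] := U_cov k.+1 x isT hx.1.
apply/mem_bigU; exists j; split => //; apply/asboolP; exists x; split => //.
exact: nbhd_mono rk _ hx.
Qed.

Lemma nb_sub_Z K A : nbhd_sph (K.+1%:R^-1) A `<=` Z K A.
Proof.
move=> x hx; apply/mem_bigI => k _ _; apply: nb_sub_W hx.
rewrite lef_pV2 ?posrE ?ltr0Sn // ler_nat ltnS; exact: (ltn_ord k).
Qed.

Lemma Z_noninc A : {homo (fun K => Z K A) : a b / (a <= b)%N >-> (b <= a)%O}.
Proof.
move=> a b ab; apply/subsetPset => x /mem_bigI h; apply/mem_bigI => k _ _.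
have kb : (k < b.+1)%N by apply: leq_trans (ltn_ord k) _; rewrite ltnS.
exact: (h (Ordinal kb) (mem_index_enum _) isT).
Qed.

Lemma sph_in_nb (r : R) (A : set 'rV[R]_n) x : 0 < r -> A x -> enorm x = 1 -> nbhd_sph r A x.
Proof. by move=> r0 Ax x1; split => //; exists x => //; rewrite subrr enorm0. Qed.

Lemma Z_cap P : symidem P -> \bigcap_K Z K (subsp_sphere P) = subsp_sphere P.
Proof.
move=> sP; apply/seteqP; split => x; last first.
  move=> hx K _; apply: nb_sub_Z; apply: sph_in_nb => //; exact: hx.2.
move=> hx.
have hW : forall K, W K (subsp_sphere P) x.
  move=> K; have /mem_bigI h := hx K I; exact: (h ord_max (mem_index_enum _) isT).
have x1 : enorm x = 1.
  by have := hW 0%N; case/mem_bigU => j [_ _ ujx]; exact: U_sub 1 j isT x ujx.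
apply: closed_sph => // e e0.
set K := Num.Def.archi_bound (2 / e).
have hK : 2 / e < K%:R by apply: archi_boundP; rewrite divr_ge0 // ltW.
case/mem_bigU: (hW K) => j [_ /asboolP [y [ujy [_ [u Tu hyu]]]] ujx].
exists u; split => //.
have hxy := U_diam K.+1 j isT x y ujx ujy.
apply: (le_lt_trans (enorm_tri x y u)).
have : 2 / K.+1%:R < e.
  rewrite ltr_pdivrMr ?ltr0Sn // -ltr_pdivrMl //.
  by rewrite mulrC (lt_le_trans hK) // ler_nat.
have -> : 2 / K.+1%:R = K.+1%:R^-1 + K.+1%:R^-1 :> R by rewrite mulr2n mulrDl mul1r.
move=> h; apply: lt_trans h; exact: ltrD.
Qed.

Lemma T_meas P : symidem P -> measurable (subsp_sphere P : set (Rn R n)).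
Proof.
move=> sP; rewrite -(Z_cap P sP); apply: bigcap_measurableType => K _; exact: Z_meas.
Qed.

Lemma Z_lim P : symidem P ->
  (fun K => mu (Z K (subsp_sphere P))) @ \oo --> mu (subsp_sphere P).
Proof.
move=> sP; rewrite -{2}(Z_cap P sP).
apply: (nonincreasing_cvg_mu (mu := mu) (F := fun K => Z K (subsp_sphere P))).
- by rewrite ltey_eq fin_num_measure //; exact: Z_meas.
- by move=> K; exact: Z_meas.
- by apply: bigcap_measurableType => K _; exact: Z_meas.
- exact: Z_noninc.
Qed.

Lemma Z_small P (L : R) : symidem P -> fine (mu (subsp_sphere P)) < L ->
  exists K, fine (mu (Z K (subsp_sphere P))) < L.
Proof.
move=> sP hL.
have fT : mu (subsp_sphere P) \is a fin_num by apply: fin_num_measure; exact: T_meas P sP.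
have := Z_lim P sP; rewrite -(fineK fT) => /fine_cvgP [_ hc].
have := cvgr_lt _ hc _ hL; case => K0 _ hK0.
by exists K0; exact: (hK0 K0 (leqnn K0)).
Qed.


Lemma natr_close (k l : nat) : `|k%:R - l%:R : R| < 1 -> k = l.
Proof.
wlog kl : k l / (k <= l)%N.
  move=> h; case/orP: (leq_total k l) => [|lk]; first exact: h.
  by rewrite distrC => /(h _ _ lk) ->.
rewrite distrC -natrB // ger0_norm ?ler0n // ltrn1 => h.
by apply/eqP; rewrite eqn_leq kl /= -subn_eq0 -leqn0 -ltnS.
Qed.

Lemma N_large m : (0 < m)%N -> (2 <= n)%N -> (m < N m)%N.
Proof.
move=> m0 n2.
have i0lt : (0 < n)%N by apply: leq_trans n2.
have i1lt : (1 < n)%N by [].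
pose i0 : 'I_n := Ordinal i0lt; pose i1 : 'I_n := Ordinal i1lt.
have i10 : i1 != i0 by [].
have mpos : (0 : R) < m%:R by rewrite ltr0n.
pose t (k : 'I_m.+1) : R := k%:R / m%:R.
have t0 k : 0 <= t k by rewrite divr_ge0.
have t1 k : t k <= 1.
  by rewrite /t ler_pdivrMr // mul1r ler_nat -ltnS ltn_ord.
pose p (k : 'I_m.+1) : 'rV[R]_n :=
  \row_(a < n) (if a == i0 then t k else if a == i1 then Num.sqrt (1 - t k ^+ 2) else 0).
have p1 k : sphere n (p k).
  rewrite /sphere /= /enorm (bigD1 i0) //= (bigD1 i1) //= big1 ?addr0.
  - rewrite !mxE eqxx (negbTE i10) eqxx sqr_sqrtr; last first.
      by rewrite subr_ge0 expr_le1.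
    by rewrite addrC subrK sqrtr1.
  - move=> a /andP [a0 a1]; rewrite mxE (negbTE a0) (negbTE a1); exact: expr0n.
have dist k l : `|t k - t l| <= enorm (p k - p l).
  by have := enorm_coord (p k - p l) i0; rewrite !mxE eqxx.
have [f hf] := choice (fun k => U_cov m (p k) m0 (p1 k)).
have finj : injective f.
  move=> k l fkl; have hl := hf l; rewrite -fkl in hl.
  have := U_diam m (f k) m0 (p k) (p l) (hf k) hl.
  move=> /(le_lt_trans (dist k l)).
  have mi : (0 : R) < m%:R^-1 by rewrite invr_gt0.
  rewrite /t -mulrBl normrM (ger0_norm (ltW mi)) -[X in _ < X]mul1r.
  rewrite ltr_pM2r ?invr_gt0 // => /natr_close h.
  by apply: val_inj.
by have := leq_card f finj; rewrite !card_ord.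
Qed.
Lemma per_i (i : nat) (L : R) :
  (1 <= i)%N -> (i <= n.-1)%N -> 0 < tmass mu -> 0 < L ->
  (forall xi : 'M[R]_n, \rank xi = i -> fine (mu (subsp_sphere xi)) / tmass mu < L) ->
  exists lt : R, (0 < lt < L) /\ exists2 N0 : R, 0 < N0 & exists2 eta : R, 0 < eta < 1 &
    forall m : nat, N0 < m%:R -> forall eta' : R, 0 < eta' <= eta ->
    forall xi : 'M[R]_n, \rank xi = i ->
      mu_bar mu (U m) (v m) (nbhd_sph eta' (subsp_sphere xi)) / tmass mu < lt.
Proof.
move=> i1 in1 Mpos L0 hL.
set M := tmass mu.
have n2 : (2 <= n)%N.
  by have : (1 <= n.-1)%N := leq_trans i1 in1; case: (n) => [|[|k]].
have hK : forall P : 'M[R]_n, exists K : nat, symidem P /\ \rank P = i ->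
    fine (mu (Z K (subsp_sphere P))) < L * M.
  move=> P; case: (pselect (symidem P /\ \rank P = i)) => [[sP rP]|nP]; last first.
    by exists 0%N.
  have h := hL P rP; rewrite ltr_pdivrMr // in h.
  by have [K hK] := Z_small P (L * M) sP h; exists K.
have [Kf hKf] := choice hK.
pose delta (P : 'M[R]_n) : R := (Kf P).+1%:R^-1.
have dpos : forall P, symidem P -> \rank P = i -> 0 < delta P.
  by move=> P _ _; rewrite invr_gt0 ltr0Sn.
have [s [hs hcov]] := cover_lemma dpos.
set C := \big[Num.max/0]_(P <- s) fine (mu (Z (Kf P) (subsp_sphere P))).
have C0 : 0 <= C by exact: bigmax_ge0.
have LM0 : 0 < L * M by rewrite mulr_gt0.
have CLM : C < L * M.
  by apply: bigmax_lt => // P Ps; apply: hKf; exact: hs.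
have Cub : forall P, P \in s -> fine (mu (Z (Kf P) (subsp_sphere P))) <= C.
  by move=> P Ps; rewrite /C; exact: (@bigmax_ub _ _ s (fun P => fine (mu (Z (Kf P) (subsp_sphere P)))) P Ps).
set Kmax := (\max_(P <- s) Kf P)%N.
set e1 : R := Kmax.+1%:R^-1.
have e1pos : 0 < e1 by rewrite invr_gt0 ltr0Sn.
have e1le1 : e1 <= 1 by rewrite invf_le1 ?ler1n ?ltr0Sn.
have e1d : forall P, P \in s -> e1 <= delta P.
  move=> P Ps; rewrite /e1 /delta lef_pV2 ?posrE ?ltr0Sn // ler_nat ltnS.
  exact: leq_bigmax_seq.
set lt := (C / M + L) / 2.
set g := (L * M - C) / 2.
have gpos : 0 < g by rewrite /g divr_gt0 // subr_gt0.
have CM0 : 0 <= C / M by rewrite divr_ge0 // ltW.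
have CML : C / M < L by rewrite ltr_pdivrMr.
have ltM : lt * M = C + g by rewrite /lt /g; field; rewrite gt_eqF.
exists lt; split; first by apply/andP; split; rewrite /lt; lra.
exists (4 / e1 + g^-1).
  by rewrite addr_gt0 // ?invr_gt0 // divr_gt0.
exists (e1 / 4); first by apply/andP; split; lra.
move=> m hm eta' /andP [e'0 e'le] xi rxi.
have ig : 0 < g^-1 by rewrite invr_gt0.
have ie : 0 < 4 / e1 by rewrite divr_gt0.
have hm1 : 4 / e1 < m%:R by lra.
have hm2 : g^-1 < m%:R by lra.
have mpos : (0 : R) < m%:R by apply: lt_trans hm2; rewrite invr_gt0.
have m0 : (0 < m)%N by rewrite -(ltr_nat R).
have im1 : m%:R^-1 < e1 / 4.
  by rewrite -[e1 / 4]invrK ltf_pV2 ?posrE ?invr_gt0 ?divr_gt0 // invf_div.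
have im2 : m%:R^-1 < g by rewrite -[g]invrK ltf_pV2 ?posrE ?invr_gt0.
have [P' [sP' eP']] := proj_exists xi.
have rP' : \rank P' = i by rewrite -rxi; apply: eqmx_rank; apply/eqmxP.
have TP' : subsp_sphere xi = subsp_sphere P'.
  apply/seteqP; split => w [hw w1]; split => //; move: hw.
    by rewrite eP'.
  by rewrite eP'.
have [P Ps hP] := hcov P' sP' rP'.
have [sP rP] := hs P Ps.
set J := fun j : 'I_(N m) => `[< nbhd_sph eta' (subsp_sphere xi) (v m j) >].
have cellsub : cellsU m J `<=` Z (Kf P) (subsp_sphere P).
  move=> x /mem_bigU [j [_ /asboolP [_ [u' Tu' hvu']] ujx]].
  rewrite TP' in Tu'.
  have [w [Tw hw]] := hP u' Tu'.
  apply: nb_sub_Z; split; first exact: (U_sub m j m0 x ujx).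
  exists w => //.
  have hx := U_diam m j m0 x (v m j) ujx (U_v m j m0).
  have h1 := enorm_tri x (v m j) u'.
  have h2 := enorm_tri x u' w.
  have h3 : enorm (u' - w) = enorm (w - u') by rewrite enormB.
  have := e1d P Ps; rewrite -/(delta P) => hd.
  lra.
have Nm := N_large m m0 n2.
have Npos : (0 : R) < (N m)%:R by rewrite ltr0n (leq_trans _ Nm).
have tlt : (N m)%:R^-1 < g.
  apply: le_lt_trans im2; rewrite lef_pV2 ?posrE // ler_nat; exact: ltnW.
have tpos : (0 : R) < (N m)%:R^-1 by rewrite invr_gt0.
have csum : \sum_(j < N m) ((N m)%:R ^+ 2)^-1 = (N m)%:R^-1 :> R.
  rewrite sumr_const card_ord -mulr_natr; field; by rewrite pnatr_eq0 -lt0n (leq_trans _ Nm).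
have dA : mu_disc mu (U m) (v m) (nbhd_sph eta' (subsp_sphere xi)) <= C + (N m)%:R^-1.
  rewrite /mu_disc big_split /= -/J.
  rewrite -(mr_cells m J m0); apply: lerD.
    apply: le_trans (Cub P Ps); apply: mr_le => //; [exact: cellsU_meas | exact: Z_meas].
  rewrite -csum big_mkcond /=; apply: ler_sum => j _.
  by case: ifP => // _; rewrite invr_ge0 exprn_ge0 // ler0n.
have dS : mu_disc mu (U m) (v m) (sphere n) = M + (N m)%:R^-1.
  rewrite /mu_disc (eq_bigl (fun=> true)); last first.
    by move=> j; apply/asboolP; exact: (U_sub m j m0 _ (U_v m j m0)).
  rewrite big_split /= (mr_sphere m m0); congr (_ + _); rewrite -csum; exact: eq_bigl.
have Dpos : 0 < M + (N m)%:R^-1 by rewrite addr_gt0.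
rewrite /mu_bar -/M dS.
set d := mu_disc _ _ _ _ in dA *.
have -> : M / (M + (N m)%:R^-1) * d / M = d / (M + (N m)%:R^-1).
  by field; rewrite !gt_eqF // ?(ltr_wpDl _ ltr01) // mulr_ge0 // ltW.
rewrite ltr_pdivrMr //.
have : 0 <= lt * (N m)%:R^-1 by rewrite mulr_ge0 // ?invr_ge0 ?ler0n //; rewrite /lt; lra.
rewrite mulrDr ltM; lra.
Qed.
End MEAS.
Theorem lemma5p10 (R : realType) (n : nat) (q : R)
  (hq1 : 1 < q) (hq2 : q < n.+1%:R)
  (mu : {finite_measure set (Rn R n) -> \bar R})
  (hmu_supp : mu (~` sphere n) = 0%E)
  (hmu : forall i : nat, (1 <= i <= n.-1)%N ->
     forall xi : 'M[R]_n, \rank xi = i ->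
       fine (mu (subsp_sphere xi)) / tmass mu < lam n q i)
  (N : nat -> nat) (U : forall m, 'I_(N m) -> set 'rV[R]_n)
  (v : forall m, 'I_(N m) -> 'rV[R]_n)
  (hcons : forall m, (0 < m)%N -> good_partition m (U m) (v m)) :
  exists lt : nat -> R,
    (forall i : nat, (1 <= i <= n.-1)%N -> 0 < lt i < lam n q i) /\
    exists2 N0 : R, 0 < N0 &
    exists2 eta0 : R, 0 < eta0 < 1 &
      forall m : nat, N0 < m%:R ->
      forall i : nat, (1 <= i <= n.-1)%N ->
      forall xi : 'M[R]_n, \rank xi = i ->
        mu_bar mu (U m) (v m) (nbhd_sph eta0 (subsp_sphere xi)) / tmass mu
          < lt i.
Proof.
have M0 : 0 <= tmass mu by exact: mr_ge0.
have lam_pos : forall i, (1 <= i)%N -> 0 < lam n q i.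
  move=> i i1; rewrite /lam divr_gt0 //.
    rewrite addr_gt0 ?ltr0n // lt_min ltr0n i1 /=; lra.
  have : (0 : R) <= n%:R by rewrite ler0n.
  lra.
have [Me|Mne] := eqVneq (tmass mu) 0.
  exists (fun i => lam n q i / 2); split.
    move=> i /andP [i1 _]; have := lam_pos i i1; move=> h; apply/andP; split; lra.
  exists 1 => //; exists (1 / 2); first by apply/andP; split; lra.
  move=> m _ i /andP [i1 _] xi _; rewrite Me invr0 mulr0.
  by have := lam_pos i i1; lra.
have Mpos : 0 < tmass mu by rewrite lt0r Mne.
pose Pr (i : nat) (t : R * R * R) :=
  0 < t.1.2 /\ 0 < t.2 /\
  ((1 <= i <= n.-1)%N -> 0 < t.1.1 < lam n q i /\
    forall m : nat, t.1.2 < m%:R -> forall eta' : R, 0 < eta' <= t.2 ->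
    forall xi : 'M[R]_n, \rank xi = i ->
      mu_bar mu (U m) (v m) (nbhd_sph eta' (subsp_sphere xi)) / tmass mu < t.1.1).
have hch : forall i, exists t, Pr i t.
  move=> i; case: (boolP (1 <= i <= n.-1)%N) => hi; last first.
    by exists (1, 1, 1); split; [|split] => // /(negP hi).
  case/andP: (hi) => i1 in1.
  have [lt [hlt [N0 N0pos [eta /andP [e0 e1] h]]]] :=
    per_i R n mu N U v hcons i (lam n q i) i1 in1 Mpos (lam_pos i i1) (hmu i hi).
  by exists (lt, N0, eta); split; [|split] => // _; split.
have [F hF] := choice hch.
have hn : forall i, (1 <= i <= n.-1)%N -> (i < n)%N.
  move=> i /andP [i1 in1]; have : (1 <= n.-1)%N := leq_trans i1 in1.
  by case: (n) in1 => [|k] //= ink _; rewrite ltnS.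
exists (fun i => (F i).1.1); split.
  by move=> i hi; have [_ [_ /(_ hi) [h _]]] := hF i.
set S := \sum_(i < n) (F i).1.2.
have S0 : 0 <= S by apply: sumr_ge0 => i _; have [h _] := hF i; exact: ltW.
exists (1 + S); first by lra.
set T := \sum_(i < n) ((F i).2)^-1.
have T0 : 0 <= T.
  by apply: sumr_ge0 => i _; have [_ [h _]] := hF i; rewrite invr_ge0 ltW.
have T2 : 1 < 2 + T by lra.
exists (2 + T)^-1.
  apply/andP; split; first by rewrite invr_gt0; lra.
  by rewrite invf_lt1 //; lra.
move=> m hm i hi xi rxi.
have [h1 [h2 /(_ hi) [_ h]]] := hF i.
pose io := Ordinal (hn i hi).
apply: h => //.
  apply: le_lt_trans hm.
  have : (F io).1.2 <= S.
    by apply: (sum_ge_term (F := fun j : 'I_n => (F j).1.2)) => j; have [h' _] := hF j; exact: ltW.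
  by rewrite /=; lra.
apply/andP; split; first by rewrite invr_gt0; lra.
rewrite -[X in _ <= X]invrK lef_pV2 ?posrE ?invr_gt0 //; last by lra.
have : ((F io).2)^-1 <= T.
  by apply: (sum_ge_term (F := fun j : 'I_n => ((F j).2)^-1)) => j; have [_ [h' _]] := hF j; rewrite invr_ge0 ltW.
by rewrite /=; lra.
Qed.
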